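(* Let $\mathcal{P}\subseteq\mathbb{Z}_{\geq0}$ with $0\in\mathcal{P}$ and $\mathcal{P}-2\neq\emptyset$. Then for all $k\ge0$, $\tau_k^\mathcal{P}<\tau_{k+1}^\mathcal{P}<\tau_\mathcal{P}$, and the sequence $(\tau_k^\mathcal{P})_{k\ge0}$ converges to $\tau_\mathcal{P}$.
   Context: $e_\mathcal{P}(z)=\sum_{n\in\mathcal{P}}z^n/n!$; $\mathcal{P}-2=\{n-2:n\in\mathcal{P},n\ge2\}$. $\tau_\mathcal{P}$ is the unique $\tau\in\mathbb{R}_{>0}$ with $e_\mathcal{P}(\tau)-\tau e_\mathcal{P}'(\tau)=0$, and $\rho_\mathcal{P}=\tau_\mathcal{P}/e_\mathcal{P}(\tau_\mathcal{P})$. Define power series $T^\mathcal{P}_{\le h}(z)$ by $T^\mathcal{P}_{\le -1}(z)=0$ and $T^\mathcal{P}_{\le h}(z)=z\,e_\mathcal{P}(T^\mathcal{P}_{\le h-1}(z))$ for $h\ge0$ (these are entire functions; $T^\mathcal{P}_{\le h}$ is the exponential generating function of labeled rooted trees of height at most $h$ in which every vertex has a number of children in $\mathcal{P}$). Then $\tau_k^\mathcal{P}=T^\mathcal{P}_{\le k-1}(\rho_\mathcal{P})$; equivalently $\tau_0^\mathcal{P}=0$ and $\tau_{k+1}^\mathcal{P}=\rho_\mathcal{P}e_\mathcal{P}(\tau_k^\mathcal{P})$. *)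

(* Defs.v *)
From Stdlib Require Import Reals Factorial.
From Coquelicot Require Import Coquelicot.
Open Scope R_scope.

Definition eP (P : nat -> bool) (x : R) : R :=
  Series (fun n => if P n then x ^ n / INR (fact n) else 0).

(* T_le P h z  =  T^P_{<= h-1}(z):  T_le P 0 z = 0 (= T_{<=-1}),
   T_le P (h+1) z = z * e_P (T_le P h z). *)
Fixpoint T_le (P : nat -> bool) (h : nat) (z : R) : R :=
  match h with
  | O => 0
  | S h' => z * eP P (T_le P h' z)
  end.

Definition rhoP (P : nat -> bool) (tau : R) : R := tau / eP P tau.

Definition tauk (P : nat -> bool) (tau : R) (k : nat) : R :=
  T_le P k (rhoP P tau).

(* Main.v *)
Require Import Defs.
From Stdlib Require Import Reals Lra Lia Psatz Factorial.
From Coquelicot Require Import Coquelicot.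
Open Scope R_scope.

Lemma Series_nonneg (u : nat -> R) : ex_series u -> (forall n, 0 <= u n) -> 0 <= Series u.
Proof.
  intros He Hu.
  assert (H0 : Series (fun _ : nat => 0) = 0).
  { pose proof (PSeries_const_0 0) as H. unfold PSeries in H. etransitivity; [|exact H]. apply Series_ext. intro; symmetry; apply Rmult_0_l. }
  rewrite <- H0. apply Series_le; auto. intro n; split; [lra|auto].
Qed.

Lemma Series_pos (u : nat -> R) (m : nat) :
  ex_series u -> (forall n, 0 <= u n) -> 0 < u m -> 0 < Series u.
Proof.
  intros He Hu Hm.
  rewrite (Series_incr_n u (S m)); [|lia|auto]. simpl pred.
  assert (Hs : 0 <= Series (fun k => u (S m + k)%nat)).
  { apply Series_nonneg. apply (ex_series_incr_n u (S m)). auto. intro; auto. }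
  assert (u m <= sum_f_R0 u m).
  { destruct m. simpl. lra. simpl. assert (0 <= sum_f_R0 u m) by (apply cond_pos_sum; auto). lra. }
  lra.
Qed.

Lemma poly_ge (x t : R) (m : nat) : 0 <= x -> 0 < t ->
  0 <= x ^ S m - t ^ S m - INR (S m) * t ^ m * (x - t).
Proof.
  intros Hx Ht. induction m.
  - simpl. apply Req_le. ring.
  - assert (E : x ^ S (S m) - t ^ S (S m) - INR (S (S m)) * t ^ S m * (x - t)
      = x * (x ^ S m - t ^ S m - INR (S m) * t ^ m * (x - t)) + INR (S m) * t ^ m * ((x - t) * (x - t))).
    { rewrite (S_INR (S m)). simpl. ring. }
    rewrite E. apply Rplus_le_le_0_compat. apply Rmult_le_pos; auto.
    apply Rmult_le_pos. apply Rmult_le_pos. apply pos_INR. apply pow_le; lra. pose proof (Rle_0_sqr (x-t)) as Hq; unfold Rsqr in Hq; lra.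
Qed.

Lemma poly_gt (x t : R) (m : nat) : 0 <= x -> 0 < t -> x <> t ->
  0 < x ^ S (S m) - t ^ S (S m) - INR (S (S m)) * t ^ S m * (x - t).
Proof.
  intros Hx Ht Hne.
  assert (E : x ^ S (S m) - t ^ S (S m) - INR (S (S m)) * t ^ S m * (x - t)
      = x * (x ^ S m - t ^ S m - INR (S m) * t ^ m * (x - t)) + INR (S m) * t ^ m * ((x - t) * (x - t))).
  { rewrite (S_INR (S m)). simpl. ring. }
  rewrite E. apply Rplus_le_lt_0_compat. apply Rmult_le_pos; auto. apply poly_ge; auto.
  apply Rmult_lt_0_compat. apply Rmult_lt_0_compat. apply lt_0_INR; lia. apply pow_lt; lra.
  assert (x - t <> 0) by lra. nra.
Qed.

Lemma pow_strict (x t : R) (n : nat) : 0 <= x < t -> x ^ S n < t ^ S n.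
Proof.
  intros H. induction n. simpl; lra.
  change (x * x ^ S n < t * t ^ S n).
  assert (0 <= x ^ S n) by (apply pow_le; lra). nra.
Qed.

Definition aP (P : nat -> bool) (n : nat) : R := if P n then / INR (fact n) else 0.

Lemma eP_PS P x : eP P x = PSeries (aP P) x.
Proof.
  unfold eP, PSeries, aP. apply Series_ext. intro n. destruct (P n).
  unfold Rdiv; ring. ring.
Qed.

Lemma radius_exp : CV_radius (fun n => / INR (fact n)) = p_infty.
Proof.
  apply CV_radius_infinite_DAlembert.
  - intro n. apply Rinv_neq_0_compat. apply INR_fact_neq_0.
  - apply is_lim_seq_ext with (fun n => / INR (S n)).
    + intro n. rewrite fact_simpl, mult_INR.
      assert (INR (fact n) <> 0) by apply INR_fact_neq_0.
      assert (0 < INR (S n)) by (apply lt_0_INR; lia).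
      rewrite Rabs_pos_eq. field. split; lra.
      unfold Rdiv. rewrite Rinv_inv. apply Rmult_le_pos.
      left; apply Rinv_0_lt_compat. apply Rmult_lt_0_compat; auto. apply INR_fact_lt_0.
      left; apply INR_fact_lt_0.
    + replace (Finite 0) with (Rbar_inv p_infty) by reflexivity.
      apply is_lim_seq_inv. apply (is_lim_seq_incr_1 INR p_infty). apply is_lim_seq_INR.
      discriminate.
Qed.

Lemma radius_aP P : CV_radius (aP P) = p_infty.
Proof.
  pose proof (CV_radius_bounded (aP P)) as Ha.
  pose proof (CV_radius_bounded (fun n => / INR (fact n))) as He.
  rewrite radius_exp in He.
  apply Rbar_le_antisym. destruct (CV_radius (aP P)); simpl; auto.
  apply He. intros r [M HM]. apply Ha. exists M. intro n.
  eapply Rle_trans; [|apply (HM n)]. rewrite !Rabs_mult. apply Rmult_le_compat_r.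
  apply Rabs_pos. unfold aP. destruct (P n). lra. rewrite Rabs_R0. apply Rabs_pos.
Qed.

Lemma inside P x : Rbar_lt (Rabs x) (CV_radius (aP P)).
Proof. rewrite radius_aP. simpl. auto. Qed.

Lemma exR_minus (a b : nat -> R) : ex_series a -> ex_series b -> ex_series (fun n => a n - b n).
Proof. intros Ha Hb. exact (ex_series_minus a b Ha Hb). Qed.

Section Main.
Variable P : nat -> bool.
Let E := PSeries (aP P).
Let D := PSeries (PS_derive (aP P)).

Lemma exs (b : nat -> R) x : Rbar_lt (Rabs x) (CV_radius b) -> ex_series (fun n => b n * x ^ n).
Proof. intro H. apply ex_series_Rabs. apply CV_disk_inside. auto. Qed.

Lemma exsa x : ex_series (fun n => aP P n * x ^ n).
Proof. apply exs, inside. Qed.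

Lemma exsd x : ex_series (fun n => PS_derive (aP P) n * x ^ n).
Proof. apply exs. rewrite CV_radius_derive. apply inside. Qed.

Lemma aP_ge n : 0 <= aP P n.
Proof. unfold aP. destruct (P n). left. apply Rinv_0_lt_compat, INR_fact_lt_0. lra. Qed.

Lemma key1 (n0 : nat) (x t : R) : (2 <= n0)%nat -> P n0 = true -> 0 <= x -> 0 < t -> x <> t ->
  E t + D t * (x - t) < E x.
Proof.
  intros Hn0 HP Hx Ht Hne.
  assert (Hs : E x - E t - D t * (x - t) =
    Series (fun k => aP P (S k) * x ^ S k - aP P (S k) * t ^ S k
                     - PS_derive (aP P) k * t ^ k * (x - t))).
  { unfold E, D, PSeries.
    rewrite (Series_incr_1 (fun n => aP P n * x ^ n)) by apply exsa.
    rewrite (Series_incr_1 (fun n => aP P n * t ^ n)) by apply exsa.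
    rewrite Series_minus. rewrite Series_minus. rewrite Series_scal_r. simpl. ring.
    apply (ex_series_incr_1 (fun n => aP P n * x ^ n)), exsa.
    apply (ex_series_incr_1 (fun n => aP P n * t ^ n)), exsa.
    apply exR_minus.
    apply (ex_series_incr_1 (fun n => aP P n * x ^ n)), exsa.
    apply (ex_series_incr_1 (fun n => aP P n * t ^ n)), exsa.
    apply ex_series_scal_r. apply exsd. }
  assert (Hterm : forall k, aP P (S k) * x ^ S k - aP P (S k) * t ^ S k
                     - PS_derive (aP P) k * t ^ k * (x - t)
                  = aP P (S k) * (x ^ S k - t ^ S k - INR (S k) * t ^ k * (x - t))).
  { intro k. unfold PS_derive. ring. }
  assert (0 < E x - E t - D t * (x - t)); [|lra].
  rewrite Hs. destruct n0 as [|[|m]]; try lia.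
  apply Series_pos with (S m).
  - apply exR_minus. apply exR_minus.
    apply (ex_series_incr_1 (fun n => aP P n * x ^ n)), exsa.
    apply (ex_series_incr_1 (fun n => aP P n * t ^ n)), exsa.
    apply ex_series_scal_r. apply exsd.
  - intro k. rewrite Hterm. apply Rmult_le_pos. apply aP_ge. apply poly_ge; auto.
  - rewrite Hterm. apply Rmult_lt_0_compat. unfold aP. rewrite HP.
    apply Rinv_0_lt_compat, INR_fact_lt_0. apply poly_gt; auto.
Qed.

Lemma key2 (n0 : nat) (x t : R) : (2 <= n0)%nat -> P n0 = true -> 0 <= x < t ->
  E x < E t.
Proof.
  intros Hn0 HP Hx.
  assert (0 < E t - E x); [|lra].
  unfold E, PSeries. rewrite <- Series_minus by apply exsa.
  destruct n0 as [|m]; try lia.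
  apply Series_pos with (S m).
  - apply exR_minus; apply exsa.
  - intro k. assert (x ^ k <= t ^ k) by (apply pow_incr; lra).
    pose proof (aP_ge k). nra.
  - assert (x ^ S m < t ^ S m) by (apply pow_strict; auto).
    unfold aP. rewrite HP. assert (0 < / INR (fact (S m))) by apply Rinv_0_lt_compat, INR_fact_lt_0.
    nra.
Qed.

End Main.

Theorem lemma7p3 (P : nat -> bool)
  (hP0 : P 0%nat = true)
  (hP2 : exists n : nat, (2 <= n)%nat /\ P n = true)
  (tau : R)
  (htau_pos : 0 < tau)
  (htau : eP P tau - tau * Derive (eP P) tau = 0) :
  (forall k : nat, tauk P tau k < tauk P tau (S k) /\ tauk P tau (S k) < tau) /\
  is_lim_seq (fun k => tauk P tau k) tau.
Proof.
  destruct hP2 as [n0 [Hn0 HPn0]].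
  set (E := PSeries (aP P)). set (D := PSeries (PS_derive (aP P))).
  assert (HeE : forall x, eP P x = E x) by (intro; apply eP_PS).
  assert (HD : Derive (eP P) tau = D tau).
  { rewrite (Derive_ext (eP P) E) by auto. unfold E, D. apply Derive_PSeries, inside. }
  rewrite HeE, HD in htau.
  assert (HE0 : E 0 = 1).
  { unfold E. rewrite PSeries_0. unfold aP. rewrite hP0. simpl. lra. }
  assert (HEt : 1 < E tau).
  { rewrite <- HE0. apply (key2 P n0); auto; lra. }
  set (rho := tau / E tau).
  assert (Hg1 : forall x, 0 <= x < tau -> x < rho * E x).
  { intros x Hx. pose proof (key1 P n0 x tau Hn0 HPn0 (proj1 Hx) htau_pos ltac:(lra)) as K.
    fold E D in K. unfold rho.
    apply Rmult_lt_reg_r with (E tau). lra.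
    replace (tau / E tau * E x * E tau) with (tau * E x) by (field; lra).
    assert (tau * (E tau + D tau * (x - tau)) < tau * E x) by (apply Rmult_lt_compat_l; lra).
    nra. }
  assert (Hg2 : forall x, 0 <= x < tau -> rho * E x < tau).
  { intros x Hx. pose proof (key2 P n0 x tau Hn0 HPn0 Hx) as K. fold E in K. unfold rho.
    apply Rmult_lt_reg_r with (E tau). lra.
    replace (tau / E tau * E x * E tau) with (tau * E x) by (field; lra).
    nra. }
  assert (Hstep : forall k, tauk P tau (S k) = rho * E (tauk P tau k)).
  { intro k. unfold tauk. simpl. rewrite HeE. unfold rhoP. rewrite HeE. reflexivity. }
  assert (Hinv : forall k, 0 <= tauk P tau k < tau).
  { induction k. unfold tauk. simpl. lra.
    rewrite Hstep. pose proof (Hg1 _ IHk). pose proof (Hg2 _ IHk). lra. }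
  assert (Hmono : forall k, tauk P tau k < tauk P tau (S k) /\ tauk P tau (S k) < tau).
  { intro k. rewrite Hstep. split; [apply Hg1|apply Hg2]; auto. }
  split; auto.
  destruct (growing_cv (fun k => tauk P tau k)) as [l Hl].
  { intro n. left. apply Hmono. }
  { exists tau. intros y [i ->]. left. apply Hinv. }
  apply is_lim_seq_Reals in Hl.
  assert (Hle : Rbar_le l tau).
  { apply (is_lim_seq_le (fun k => tauk P tau k) (fun _ => tau) l tau). intro; left; apply Hinv. auto. apply is_lim_seq_const. }
  assert (Hge : Rbar_le 0 l).
  { apply (is_lim_seq_le (fun _ => 0) (fun k => tauk P tau k) 0 l). intro; apply Hinv. apply is_lim_seq_const. auto. }
  simpl in Hle, Hge.
  assert (H1 : is_lim_seq (fun k => tauk P tau (S k)) l) by (apply (is_lim_seq_incr_1 (fun k => tauk P tau k)); auto).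
  assert (H2 : is_lim_seq (fun k => tauk P tau (S k)) (rho * E l)).
  { apply is_lim_seq_ext with (fun k => rho * E (tauk P tau k)). intro; rewrite Hstep; auto.
    apply (is_lim_seq_scal_l _ rho (E l)).
    apply is_lim_seq_continuous; auto. unfold E. apply PSeries_continuity, inside. }
  apply is_lim_seq_unique in H1. apply is_lim_seq_unique in H2.
  rewrite H1 in H2. injection H2 as H2.
  destruct Hle as [Hlt|Heq].
  - pose proof (Hg1 l (conj Hge Hlt)). lra.
  - subst. auto.
Qed.
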